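(* Let $G$ and $H$ be finite simple graphs, neither complete, not both equal to a disjoint union of two complete graphs, and suppose ${\rm diam}(G\diamond H)=3$. Then for vertices $(g,h),(g',h')$ of $G\diamond H$, $(g,h)(g',h')\in E((G\diamond H)_{SR})$ if and only if the (unordered) pair satisfies at least one of the following, where in (iv) and (v) either vertex may play the role of $(g,h)$: (i) $(g,h)\neq(g',h')$ and $N_{G\diamond H}[(g,h)]=N_{G\diamond H}[(g',h')]$; (ii) $d_{G\diamond H}((g,h),(g',h'))=2$ and neither $(g,h)$ nor $(g',h')$ is a boundary vertex of $G\diamond H$; (iii) $d_{G\diamond H}((g,h),(g',h'))=3$; (iv) $g$ and $g'$ are universal vertices of $G$, $d_H(h,h')=2$ and $hh'\in E(H_{SR})$; or $h$ and $h'$ are universal vertices of $H$, $d_G(g,g')=2$ and $gg'\in E(G_{SR})$; (v) $g$ is universal in $G$, $g'$ is not universal in $G$, $d_H(h,h')=2$, $d_H(h,h'')\le 2$ for every $h''\in N_H[h']$, and $h'$ belongs to no $\gamma_H$-pair; or $h$ is universal in $H$, $h'$ is not universal in $H$, $d_G(g,g')=2$, $d_G(g,g'')\le 2$ for every $g''\in N_G[g']$, and $g'$ belongs to no $\gamma_G$-pair.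
   Context: The modular product $G\diamond H$ has vertex set $V(G)\times V(H)$; distinct vertices $(g,h)$ and $(g',h')$ are adjacent iff ($g=g'$ and $hh'\in E(H)$), or ($gg'\in E(G)$ and $h=h'$), or ($gg'\in E(G)$ and $hh'\in E(H)$), or ($g\neq g'$, $h\neq h'$, $gg'\notin E(G)$ and $hh'\notin E(H)$). A vertex $v$ is universal in $X$ if $N_X[v]=V(X)$. A boundary vertex of a connected graph $X$ is a vertex $u$ for which some $v$ has $d_X(u,v)={\rm diam}(X)$. A $\gamma_G$-pair is a set $\{g,g'\}$ of two distinct vertices of $G$ such that $N_G[g]\cap N_G[g']=\emptyset$ and $N_G[g]\cup N_G[g']=V(G)$. Two distinct vertices $u,v$ of a graph $X$ lying in the same connected component are mutually maximally distant if there is no $x\in N_X(u)$ with $d_X(x,v)=d_X(u,v)+1$ and no $y\in N_X(v)$ with $d_X(y,u)=d_X(u,v)+1$; the strong resolving graph $X_{SR}$ has as edges exactly the mutually maximally distant pairs. *)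

(* Defs.v *)
(* A finite simple graph is a symmetric irreflexive
   relation e : rel T on a finType T. *)
From mathcomp Require Import all_boot.
Set Implicit Arguments. Unset Strict Implicit. Unset Printing Implicit Defensive.

Section Graphs.
Variable T : finType.
Implicit Types (e : rel T) (x y u v : T).

Fixpoint ball e (k : nat) x : {set T} :=
  match k with
  | 0 => [set x]
  | k'.+1 => ball e k' x :|: [set y | [exists z in ball e k' x, e z y]]
  end.

Definition dist_le e x y k : bool := y \in ball e k x.

Definition dist_eq e x y k : bool :=
  (y \in ball e k x) && (if k is k'.+1 then y \notin ball e k' x else true).

Definition diam_eq e k : Prop :=
  (forall x y, dist_le e x y k) /\ (exists x y, dist_eq e x y k).

Definition boundary e u : Prop :=
  exists k, diam_eq e k /\ exists v, dist_eq e u v k.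

Definition cnbhd e v : {set T} := [set w | (w == v) || e v w].

Definition universal e v : Prop := cnbhd e v = [set: T].

Definition complete e : Prop := forall x y, x != y -> e x y.

Definition two_cliques e : Prop :=
  exists A : {set T}, A != set0 /\ ~: A != set0 /\
    forall x y, x != y -> e x y = ((x \in A) == (y \in A)).

Definition gamma_pair e g g' : Prop :=
  g != g' /\ cnbhd e g :&: cnbhd e g' = set0 /\
  cnbhd e g :|: cnbhd e g' = [set: T].

(* mutually maximally distant = edge of the strong resolving graph *)
Definition SR_edge e u v : Prop :=
  u != v /\ exists k, dist_eq e u v k /\
    (forall x, e u x -> ~~ dist_eq e x v k.+1) /\
    (forall y, e v y -> ~~ dist_eq e y u k.+1).

End Graphs.

Definition modprod (T1 T2 : finType) (eG : rel T1) (eH : rel T2) : rel (T1 * T2) :=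
  fun a b =>
    (a != b) &&
    [|| (a.1 == b.1) && eH a.2 b.2,
        eG a.1 b.1 && (a.2 == b.2),
        eG a.1 b.1 && eH a.2 b.2
      | [&& a.1 != b.1, a.2 != b.2, ~~ eG a.1 b.1 & ~~ eH a.2 b.2]].

Definition cond_iv (T1 T2 : finType) (eG : rel T1) (eH : rel T2)
  (a b : T1 * T2) : Prop :=
  (universal eG a.1 /\ universal eG b.1 /\ dist_eq eH a.2 b.2 2 /\ SR_edge eH a.2 b.2)
  \/
  (universal eH a.2 /\ universal eH b.2 /\ dist_eq eG a.1 b.1 2 /\ SR_edge eG a.1 b.1).

Definition cond_v (T1 T2 : finType) (eG : rel T1) (eH : rel T2)
  (a b : T1 * T2) : Prop :=
  (universal eG a.1 /\ ~ universal eG b.1 /\ dist_eq eH a.2 b.2 2 /\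
   (forall h'', h'' \in cnbhd eH b.2 -> dist_le eH a.2 h'' 2) /\
   ~ (exists h0, gamma_pair eH b.2 h0))
  \/
  (universal eH a.2 /\ ~ universal eH b.2 /\ dist_eq eG a.1 b.1 2 /\
   (forall g'', g'' \in cnbhd eG b.1 -> dist_le eG a.1 g'' 2) /\
   ~ (exists g0, gamma_pair eG b.1 g0)).

(* Main.v *)
Require Import Defs.
From mathcomp Require Import all_boot.
From Stdlib Require Import Classical.
Set Implicit Arguments. Unset Strict Implicit. Unset Printing Implicit Defensive.

Section Gen.
Variables (T : finType) (e : rel T).
Hypotheses (se : symmetric e) (ie : irreflexive e).

Definition meet x y := [exists w, (w \in cnbhd e x) && (w \in cnbhd e y)].
Definition dom x y := forall w, (w \in cnbhd e x) || (w \in cnbhd e y).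
Definition Dd a b := b \notin cnbhd e a /\ (forall x, x \in cnbhd e a -> meet x b) /\
  (forall y, y \in cnbhd e b -> meet y a).

Lemma inN x y : (y \in cnbhd e x) = (y == x) || e x y.
Proof. by rewrite inE. Qed.
Lemma inNx x : x \in cnbhd e x.
Proof. by rewrite inN eqxx. Qed.
Lemma inN_sym x y : (y \in cnbhd e x) = (x \in cnbhd e y).
Proof. by rewrite !inN eq_sym se. Qed.
Lemma meetC x y : meet x y = meet y x.
Proof. by apply/existsP/existsP => -[w /andP[a b]]; exists w; rewrite a b. Qed.
Lemma meetW x y w : w \in cnbhd e x -> w \in cnbhd e y -> meet x y.
Proof. by move=> a b; apply/existsP; exists w; rewrite a b. Qed.
Lemma meetxx x : meet x x.
Proof. exact: (meetW (inNx x) (inNx x)). Qed.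
Lemma edgeE x y : e x y = (y != x) && (y \in cnbhd e x).
Proof. by rewrite inN; case: eqVneq => [->|_] /=; rewrite ?ie. Qed.
Lemma univ_in x : universal e x -> forall y, y \in cnbhd e x.
Proof. by move=> -> y; rewrite inE. Qed.
Lemma notuniv x : ~ universal e x -> exists t, t \notin cnbhd e x.
Proof.
move=> nu; apply: NNPP => nex; apply: nu; apply/setP => t; rewrite in_setT.
by apply/negPn/negP => tn; apply: nex; exists t.
Qed.

Lemma ballS k x y : (y \in ball e k.+1 x) = [exists z in ball e k x, y \in cnbhd e z].
Proof.
rewrite /= in_setU in_set; apply/orP/existsP.
- case=> [yin|/existsP[z /andP[zin ezy]]]; [exists y | exists z]; rewrite ?yin ?inNx //.
  by rewrite zin inN ezy orbT.
- move=> [z /andP[zin]]; rewrite inN => /orP[/eqP->|ezy]; [by left|right].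
  by apply/existsP; exists z; rewrite zin.
Qed.
Lemma ball1 x y : (y \in ball e 1 x) = (y \in cnbhd e x).
Proof.
rewrite ballS; apply/existsP/idP => [[z /andP[]]|yx]; last by exists x; rewrite inE eqxx.
by rewrite inE => /eqP->.
Qed.
Lemma ball2 x y : (y \in ball e 2 x) = meet x y.
Proof.
rewrite ballS; apply/existsP/existsP => -[z /andP[]].
- by rewrite ball1 => a b; exists z; rewrite a -inN_sym b.
- by move=> a b; exists z; rewrite ball1 a inN_sym b.
Qed.
Lemma ball_le k k' x y : k <= k' -> y \in ball e k x -> y \in ball e k' x.
Proof.
elim: k' => [|k' IH]; first by rewrite leqn0 => /eqP->.
rewrite leq_eqVlt => /orP[/eqP->//|lt] yk.
by rewrite /= inE (IH _ yk).
Qed.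
Lemma dist_eq_uniq x y k k' : dist_eq e x y k -> dist_eq e x y k' -> k = k'.
Proof.
wlog lt: k k' / k < k'.
  move=> W h1 h2; case: (ltngtP k k') => // c; [exact: W| symmetry; exact: W].
move=> /andP[yk _]; case: k' lt => // k' lt /andP[_ /negP []].
by apply: ball_le yk; rewrite -ltnS.
Qed.
Lemma d0E x y : dist_eq e x y 0 = (y == x).
Proof. by rewrite /dist_eq inE andbT. Qed.
Lemma distS x y k : dist_eq e x y k.+1 = (y \in ball e k.+1 x) && (y \notin ball e k x).
Proof. by []. Qed.
Lemma ball0 x y : (y \in ball e 0 x) = (y == x).
Proof. by rewrite inE. Qed.
Lemma d1E x y : dist_eq e x y 1 = e x y.
Proof. by rewrite distS ball1 ball0 edgeE andbC. Qed.
Lemma d2E x y : dist_eq e x y 2 = meet x y && (y \notin cnbhd e x).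
Proof. by rewrite distS ball2 ball1. Qed.

Lemma d3_nb x y u : meet x y -> e x u -> dist_eq e u y 3 = ~~ meet u y.
Proof.
move=> /existsP[w /andP[wx wy]] xu; rewrite distS ball2.
have -> : y \in ball e 3 u; last by [].
rewrite ballS; apply/existsP; exists w; rewrite ball2 -inN_sym wy andbT.
apply: (meetW (w := x)); first by rewrite inN_sym inN xu orbT.
by rewrite inN_sym.
Qed.

Lemma SRH x y : dist_eq e x y 2 -> SR_edge e x y <->
  (forall u, e x u -> meet u y) /\ (forall u, e y u -> meet u x).
Proof.
move=> d2; have /andP[mxy nyx] := d2; rewrite ball2 in mxy; rewrite ball1 in nyx; split.
- move=> [_ [k [dk [c1 c2]]]]; have k2 := dist_eq_uniq dk d2; subst k; split.
  + by move=> u xu; move: (c1 u xu); rewrite (d3_nb mxy xu) negbK.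
  + have myx : meet y x by rewrite meetC.
    by move=> u yu; move: (c2 u yu); rewrite (d3_nb myx yu) negbK.
- move=> [c1 c2]; split.
    by apply: contra nyx => /eqP->; apply: inNx.
  have myx : meet y x by rewrite meetC.
  exists 2; split => //; split.
  + by move=> u xu; rewrite (d3_nb mxy xu) c1.
  + by move=> u yu; rewrite (d3_nb myx yu) c2.
Qed.

Section Full.
Hypothesis full : forall x y, y \in ball e 3 x.

Lemma d3E x y : dist_eq e x y 3 = ~~ meet x y.
Proof. by rewrite distS ball2 full. Qed.
Lemma dbig x y k : 3 < k -> dist_eq e x y k = false.
Proof.
case: k => // k lt; apply/negbTE; rewrite distS negb_and negbK.
have le3 : 3 <= k by [].
by rewrite (ball_le le3 (full x y)) orbT.
Qed.

Lemma SR_char a b : SR_edge e a b <->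
  (e a b /\ cnbhd e a = cnbhd e b) \/ Dd a b \/ ~~ meet a b.
Proof.
split.
- move=> [nab [k [dk [c1 c2]]]].
  case: k dk c1 c2 => [|[|[|[|k]]]] dk c1 c2.
  + by rewrite d0E eq_sym (negbTE nab) in dk.
  + rewrite d1E in dk; left; split => //.
    have key : forall u v, e u v -> (forall x, e u x -> ~~ dist_eq e x v 2) ->
       cnbhd e u \subset cnbhd e v.
      move=> u v uv cu; apply/subsetP => w; rewrite inN => /orP[/eqP->|uw].
        by rewrite inN_sym inN uv orbT.
      move: (cu w uw); rewrite d2E negb_and negbK => /orP[|]; last by rewrite inN_sym.
      by rewrite (meetW (w := u)) // inN_sym inN ?uv ?uw orbT.
    by apply/eqP; rewrite eqEsubset !key // se.
  + rewrite d2E in dk; case/andP: dk => mab nba; right; left; split => //; split.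
    * move=> x; rewrite inN => /orP[/eqP->//|ax].
      by move: (c1 x ax); rewrite d3E negbK.
    * move=> y; rewrite inN => /orP[/eqP->|b_y]; first by rewrite meetC.
      by move: (c2 y b_y); rewrite d3E negbK.
  + by rewrite d3E in dk; right; right.
  + by rewrite dbig in dk.
- case=> [[ab tw]|[[nba [c1 c2]]|nm]].
  + split; first by apply: contraTneq ab => ->; rewrite ie.
    exists 1; rewrite d1E; split => //; split.
    * by move=> x ax; rewrite d2E negb_and negbK (inN_sym x b) -tw inN ax !orbT.
    * by move=> x ax; rewrite d2E negb_and negbK (inN_sym x a) tw inN ax !orbT.
  + split; first by apply: contraNneq nba => ->; apply: inNx.
    exists 2; rewrite d2E nba (c1 _ (inNx a)); split => //; split.
    * by move=> x ax; rewrite d3E negbK c1 // inN ax orbT.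
    * by move=> x ax; rewrite d3E negbK c2 // inN ax orbT.
  + split; first by apply: contraNneq nm => ->; apply: meetxx.
    by exists 3; rewrite d3E nm; split => //; split => x _; rewrite dbig.
Qed.

End Full.

Lemma bdE (dm : diam_eq e 3) u : boundary e u <-> exists v, ~~ meet u v.
Proof.
have full := dm.1; split.
- move=> [k [[dk [x [y dxy]]] [v duv]]].
  have k3 : k = 3.
    have [lt3|le3] := ltnP 3 k; first by rewrite dbig in dxy.
    have [le2|lt2] := leqP k 2.
      have [x0 [y0 d0]] := dm.2; rewrite d3E // in d0.
      by move: (ball_le le2 (dk x0 y0)); rewrite ball2 (negbTE d0).
    by apply/eqP; rewrite eqn_leq le3 lt2.
  by subst k; exists v; rewrite -d3E.
- move=> [v nm]; exists 3; split => //; exists v; by rewrite d3E.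
Qed.

Lemma Dd_sym a b : Dd a b -> Dd b a.
Proof. by move=> [n [c1 c2]]; split => //; rewrite inN_sym. Qed.

End Gen.


Section Prod.
Variables (T1 T2 : finType) (eG : rel T1) (eH : rel T2).
Hypotheses (sG : symmetric eG) (iG : irreflexive eG) (sH : symmetric eH) (iH : irreflexive eH).
Local Notation P := (modprod eG eH).
Local Notation N := (cnbhd eG).
Local Notation M := (cnbhd eH).

Lemma Pirr : irreflexive P.
Proof. by move=> a; rewrite /modprod eqxx. Qed.

Lemma cnbhdP (a x : T1 * T2) : (x \in cnbhd P a) = ((x.1 \in N a.1) == (x.2 \in M a.2)).
Proof.
case: a x => g h [x1 x2]; rewrite !inN /modprod /= !xpair_eqE.
case: (eqVneq x1 g) => [->|n1]; case: (eqVneq x2 h) => [->|n2]; rewrite ?iG ?iH ?eqxx //=;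
  by case: (eG g x1); case: (eH h x2).
Qed.

Lemma Psym : symmetric P.
Proof.
move=> a b; rewrite !(edgeE Pirr) !cnbhdP eq_sym (inN_sym sG b.1) (inN_sym sH b.2).
by [].
Qed.

Lemma farNb a b : ~~ meet P a b -> b \notin cnbhd P a.
Proof. by apply: contra => ba; apply: (meetW ba); apply: inNx. Qed.

Lemma far_split g h g' h' : ~~ meet P (g,h) (g',h') -> (g' \in N g) != (h' \in M h).
Proof. by move/farNb; rewrite cnbhdP. Qed.

Lemma farE a b : ~~ meet P a b ->
  forall x1 x2, ~~ (((x1 \in N a.1) == (x2 \in M a.2)) && ((x1 \in N b.1) == (x2 \in M b.2))).
Proof. by move/existsPn => nm x1 x2; move: (nm (x1,x2)); rewrite !cnbhdP. Qed.

Lemma far_half g h g' h' : g' \in N g -> ~~ meet P (g,h) (g',h') ->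
  [/\ N g = N g', ~~ meet eH h h' & universal eG g \/ dom eH h h'].
Proof.
move=> gg' far; have nm := farE far; rewrite /= in nm.
have := far_split far; rewrite gg' => hh'; have {}hh' : h' \notin M h by case: (h' \in M h) hh'.
have gg'2 : g \in N g' by rewrite (inN_sym sG).
have hh'2 : h \notin M h' by rewrite (inN_sym sH).
have tw : N g = N g'.
  apply/setP => w; apply/idP/idP => wi; apply/negPn/negP => wn.
  - by move: (nm w h); rewrite wi (negbTE wn) (inNx eH h) (negbTE hh'2).
  - by move: (nm w h'); rewrite wi (negbTE wn) (inNx eH h') (negbTE hh').
split => //.
- apply/negP => /existsP[w /andP[w1 w2]].
  by move: (nm g w); rewrite (inNx eG g) gg'2 w1 w2.
- case: (classic (universal eG g)) => ug; [by left | right].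
  have [t tn] := notuniv ug; move=> w; apply/negPn/negP; rewrite negb_or => /andP[wn1 wn2].
  by move: (nm t w); rewrite (negbTE tn) -tw (negbTE tn) (negbTE wn1) (negbTE wn2).
Qed.

Lemma far_half_rev g h g' h' : N g = N g' -> ~~ meet eH h h' ->
  universal eG g \/ dom eH h h' -> ~~ meet P (g,h) (g',h').
Proof.
move=> tw fr ud; apply/existsPn => -[x1 x2]; rewrite !cnbhdP /= -tw.
case: (boolP (x1 \in N g)) => xg /=.
- apply/negP => /andP[/eqP a /eqP b]; move/negP: fr; apply.
  by apply: (meetW (w := x2)); rewrite -?a -?b.
- case: ud => [ug|dm]; first by rewrite (univ_in ug) in xg.
  by move: (dm x2); case: (x2 \in M h); case: (x2 \in M h').
Qed.

End Prod.

Lemma cnbhd_swap (T1 T2 : finType) (eG : rel T1) (eH : rel T2)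
  (iG : irreflexive eG) (iH : irreflexive eH) (a x : T1 * T2) :
  ((x.2,x.1) \in cnbhd (modprod eH eG) (a.2,a.1)) = (x \in cnbhd (modprod eG eH) a).
Proof. by rewrite !cnbhdP //= eq_sym. Qed.

Lemma meet_swap (T1 T2 : finType) (eG : rel T1) (eH : rel T2)
  (iG : irreflexive eG) (iH : irreflexive eH) (a b : T1 * T2) :
  meet (modprod eH eG) (a.2,a.1) (b.2,b.1) = meet (modprod eG eH) a b.
Proof.
apply/existsP/existsP => -[[w1 w2] /andP[u v]].
- exists (w2,w1); rewrite -(cnbhd_swap iG iH a) -(cnbhd_swap iG iH b) /=.
  by rewrite u v.
- exists (w2,w1); rewrite -(cnbhd_swap iG iH a (w1,w2)) -(cnbhd_swap iG iH b (w1,w2)) in u v.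
  by rewrite u v.
Qed.

Lemma D_swap (T1 T2 : finType) (eG : rel T1) (eH : rel T2)
  (sG : symmetric eG) (iG : irreflexive eG) (sH : symmetric eH) (iH : irreflexive eH)
  g h g' h' : Dd (modprod eG eH) (g,h) (g',h') -> Dd (modprod eH eG) (h,g) (h',g').
Proof.
move=> [nb [c1 c2]]; split.
  by have := cnbhd_swap iG iH (g,h) (g',h'); rewrite /= => ->.
split.
- move=> [x2 x1]; have := cnbhd_swap iG iH (g,h) (x1,x2); rewrite /= => -> /c1.
  by have := meet_swap iG iH (x1,x2) (g',h'); rewrite /= => ->.
- move=> [x2 x1]; have := cnbhd_swap iG iH (g',h') (x1,x2); rewrite /= => -> /c2.
  by have := meet_swap iG iH (x1,x2) (g,h); rewrite /= => ->.
Qed.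

Lemma far_half2 (T1 T2 : finType) (eG : rel T1) (eH : rel T2)
  (sG : symmetric eG) (iG : irreflexive eG) (sH : symmetric eH) (iH : irreflexive eH)
  g h g' h' : h' \in cnbhd eH h -> ~~ meet (modprod eG eH) (g,h) (g',h') ->
  [/\ cnbhd eH h = cnbhd eH h', ~~ meet eG g g' & universal eH h \/ dom eG g g'].
Proof.
move=> hh' far; apply: (far_half sH iH sG iG hh').
by have := meet_swap iG iH (g,h) (g',h'); rewrite /= => ->.
Qed.

Lemma far_half_rev2 (T1 T2 : finType) (eG : rel T1) (eH : rel T2)
  (sG : symmetric eG) (iG : irreflexive eG) (sH : symmetric eH) (iH : irreflexive eH)
  g h g' h' : cnbhd eH h = cnbhd eH h' -> ~~ meet eG g g' ->
  universal eH h \/ dom eG g g' -> ~~ meet (modprod eG eH) (g,h) (g',h').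
Proof.
move=> tw fr ud; have := meet_swap iG iH (g,h) (g',h'); rewrite /= => <-.
exact: far_half_rev.
Qed.


Section Core.
Variables (T1 T2 : finType) (eG : rel T1) (eH : rel T2).
Hypotheses (sG : symmetric eG) (iG : irreflexive eG) (sH : symmetric eH) (iH : irreflexive eH).
Local Notation P := (modprod eG eH).
Local Notation N := (cnbhd eG).
Local Notation M := (cnbhd eH).

Lemma core g h g' h' z2 :
  Dd P (g,h) (g',h') -> ~~ meet eH h z2 -> (universal eG g \/ dom eH h z2) ->
  cond_iv eG eH (g,h) (g',h') \/ cond_v eG eH (g,h) (g',h').
Proof.
move=> [nb [HA HB]] fz uz.
rewrite (cnbhdP iG iH) /= in nb.
have Fl : forall w, ~~ meet eH h w -> (universal eG g \/ dom eH h w) ->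
    (g, w) \in cnbhd P (g',h') -> False.
  move=> w fw uw /HB; apply/negP; rewrite meetC.
  exact: (far_half_rev iG iH).
case: (boolP (g' \in N g)) => gg'.
- have hh' : h' \notin M h by move: nb; rewrite gg'; case: (h' \in M h).
  have gg'2 : g \in N g' by rewrite (inN_sym sG).
  have K : forall w, w \in M h' -> ~~ meet eH h w -> (universal eG g \/ dom eH h w) -> False.
    move=> w wh fw uw; apply: (Fl w fw uw).
    by rewrite (cnbhdP iG iH) /= gg'2 wh.
  have Kmeet : universal eG g -> forall w, w \in M h' -> meet eH h w.
    move=> ug w wh; apply: contraT => fw; case: (K w wh fw); by left.
  case: (classic (universal eG g)) => ug; last first.
    case: uz => // dz; exfalso.
    have zh : z2 \in M h'.
      by have := dz h'; rewrite (negbTE hh') /= (inN_sym sH).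
    by apply: (K z2 zh fz); right.
  have dist2 : dist_eq eH h h' 2 by rewrite (d2E sH) (Kmeet ug h' (inNx eH h')) hh'.
  case: (classic (N g' = N g)) => tw.
  + left; left; split => //; split; first by rewrite /universal tw.
    split => //; apply/(SRH sH dist2); split.
    * move=> u hu; have := HA (g,u); rewrite (cnbhdP iG iH) /= (inNx eG g).
      rewrite (inN eH h u) hu orbT => /(_ isT) m.
      apply: contraT => fr.
      have : ~~ meet P (g,u) (g',h') by apply: (far_half_rev iG iH); [rewrite tw | | left].
      by rewrite m.
    * move=> u hu; rewrite meetC; apply: Kmeet => //; by rewrite inN hu orbT.
  + right; left; split => //; split.
      by move=> ug'; apply: tw; rewrite ug ug'.
    split => //; split.
      by move=> h'' hh''; rewrite /dist_le (ball2 sH); apply: Kmeet.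
    move=> [h0 [ne [cap cup]]].
    have hh0 : h0 \in M h.
      have : h \in M h' :|: M h0 by rewrite cup in_setT.
      by rewrite in_setU (inN_sym sH h' h) (negbTE hh') /= (inN_sym sH).
    have := HA (g',h0); rewrite (cnbhdP iG iH) /= gg' hh0 => /(_ isT).
    apply/negP; apply: (far_half_rev iG iH) => //.
      apply/negP => /existsP[w /andP[w1 w2]].
      have : w \in M h' :&: M h0 by rewrite in_setI w1 w2.
      by rewrite cap in_set0.
    right => w; have : w \in M h' :|: M h0 by rewrite cup in_setT.
    by rewrite in_setU orbC.
- exfalso.
  have hh' : h' \in M h by move: nb; rewrite (negbTE gg'); case: (h' \in M h).
  have zh : z2 \in M h'.
    apply/negPn/negP => zn; apply: (Fl z2 fz uz).
    by rewrite (cnbhdP iG iH) /= (inN_sym sG g' g) (negbTE gg') (negbTE zn).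
  move/negP: fz; apply; apply: (meetW (w := h')) => //.
  by rewrite (inN_sym sH).
Qed.

Lemma half_iv g h g' h' : universal eG g -> universal eG g' -> meet eH h h' ->
  (forall u, eH h u -> meet eH u h') -> forall x, x \in cnbhd P (g,h) -> meet P x (g',h').
Proof.
move=> ug ug' mhh' Hu [x1 x2]; rewrite (cnbhdP iG iH) /= (univ_in ug) => /eqP/esym x2h.
apply: contraT => far.
have gx : g' \in N x1 by rewrite (inN_sym sG) (univ_in ug').
have [_ fr _] := far_half sG iG sH iH gx far.
move: x2h; rewrite inN => /orP[/eqP e2|hx].
- by subst x2; rewrite mhh' in fr.
- by rewrite Hu in fr.
Qed.

Lemma iv_D g h g' h' : universal eG g -> universal eG g' -> dist_eq eH h h' 2 ->
  SR_edge eH h h' -> Dd P (g,h) (g',h').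
Proof.
move=> ug ug' d2 sr; have [c1 c2] := (SRH sH d2).1 sr.
move: d2; rewrite (d2E sH) => /andP[mhh' hh'].
split; first by rewrite (cnbhdP iG iH) /= (univ_in ug) (negbTE hh').
split; first exact: half_iv.
by apply: half_iv => //; rewrite meetC.
Qed.

Lemma v_D g h g' h' : universal eG g -> ~ universal eG g' -> dist_eq eH h h' 2 ->
  (forall h'', h'' \in M h' -> dist_le eH h h'' 2) -> ~ (exists h0, gamma_pair eH h' h0) ->
  Dd P (g,h) (g',h').
Proof.
move=> ug nug'; rewrite (d2E sH) => /andP[mhh' hh'] Hd ng.
split; first by rewrite (cnbhdP iG iH) /= (univ_in ug) (negbTE hh').
split.
- move=> [x1 x2]; rewrite (cnbhdP iG iH) /= (univ_in ug) => /eqP/esym x2h.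
  apply: contraT => far; have := far_split iG iH far.
  case: (boolP (g' \in N x1)) => gx.
  + have [tw fr [ux|dx]] := far_half sG iG sH iH gx far.
      by case: nug'; rewrite /universal -tw.
    case: ng; exists x2; split.
      by apply: contraNneq fr => ->; apply: meetxx.
    split.
      apply/setP => w; rewrite in_setI in_set0; apply/negP => /andP[w1 w2].
      by move/negP: fr; apply; apply: (meetW w2 w1).
    by apply/setP => w; rewrite in_setU in_setT orbC dx.
  + move=> /= hx; have {}hx : h' \in M x2 by case: (h' \in M x2) hx.
    have [tw _ _] := far_half2 sG iG sH iH hx far.
    move: x2h; rewrite (inN_sym sH) tw (inN_sym sH) => hh; by rewrite hh in hh'.
- move=> [y1 y2]; rewrite (cnbhdP iG iH) /= => hy.
  apply: contraT => far; have := far_split iG iH far.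
  rewrite (inN_sym sG) (univ_in ug) /= => hy2; have {}hy2 : h \notin M y2 by case: (h \in M y2) hy2.
  have gy : g \in N y1 by rewrite (inN_sym sG) (univ_in ug).
  have [tw fr _] := far_half sG iG sH iH gy far.
  have y1g' : y1 \in N g' by rewrite (inN_sym sG) tw (univ_in ug).
  move: hy; rewrite y1g' => /eqP/esym /Hd; rewrite /dist_le (ball2 sH) meetC => m.
  by rewrite m in fr.
Qed.
End Core.


Lemma KEY (T1 T2 : finType) (eG : rel T1) (eH : rel T2)
  (sG : symmetric eG) (iG : irreflexive eG) (sH : symmetric eH) (iH : irreflexive eH)
  g h g' h' z : Dd (modprod eG eH) (g,h) (g',h') -> ~~ meet (modprod eG eH) (g,h) z ->
  cond_iv eG eH (g,h) (g',h') \/ cond_v eG eH (g,h) (g',h').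
Proof.
case: z => z1 z2 D far; have := far_split iG iH far.
case: (boolP (z1 \in cnbhd eG g)) => gz.
- have [_ fr ud] := far_half sG iG sH iH gz far.
  by move=> _; exact: (core sG iG sH iH D fr ud).
- move=> /= hz; have {}hz : z2 \in cnbhd eH h by case: (z2 \in cnbhd eH h) hz.
  have [_ fr ud] := far_half2 sG iG sH iH hz far.
  have D' := D_swap sG iG sH iH D.
  case: (core sH iH sG iG D' fr ud) => [[[? [? [? ?]]]|[? [? [? ?]]]]|[[? [? [? [? ?]]]]|[? [? [? [? ?]]]]]].
  + by left; right.
  + by left; left.
  + by right; right.
  + by right; left.
Qed.

Lemma REV (T1 T2 : finType) (eG : rel T1) (eH : rel T2)
  (sG : symmetric eG) (iG : irreflexive eG) (sH : symmetric eH) (iH : irreflexive eH)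
  g h g' h' : cond_iv eG eH (g,h) (g',h') \/ cond_v eG eH (g,h) (g',h') ->
  Dd (modprod eG eH) (g,h) (g',h').
Proof.
case=> [[[u1 [u2 [d s]]]|[u1 [u2 [d s]]]]|[[u1 [u2 [d [s t]]]]|[u1 [u2 [d [s t]]]]]].
- exact: (iv_D sG iG sH iH).
- exact: (D_swap sH iH sG iG (iv_D sH iH sG iG u1 u2 d s)).
- exact: (v_D sG iG sH iH).
- exact: (D_swap sH iH sG iG (v_D sH iH sG iG u1 u2 d s t)).
Qed.

Theorem mainTheorem6 (T1 T2 : finType) (eG : rel T1) (eH : rel T2) :
  symmetric eG -> irreflexive eG ->
  symmetric eH -> irreflexive eH ->
  ~ complete eG -> ~ complete eH ->
  ~ (two_cliques eG /\ two_cliques eH) ->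
  diam_eq (modprod eG eH) 3 ->
  forall a b : T1 * T2,
    SR_edge (modprod eG eH) a b <->
    (* (i) *) (a != b /\ cnbhd (modprod eG eH) a = cnbhd (modprod eG eH) b) \/
    (* (ii) *) (dist_eq (modprod eG eH) a b 2 /\
          ~ boundary (modprod eG eH) a /\ ~ boundary (modprod eG eH) b) \/
    (* (iii) *) dist_eq (modprod eG eH) a b 3 \/
    (* (iv) *) (cond_iv eG eH a b \/ cond_iv eG eH b a) \/
    (* (v) *) (cond_v eG eH a b \/ cond_v eG eH b a).
Proof.
move=> sG iG sH iH _ _ _ dm [g h] [g' h'].
have sP := Psym sG iG sH iH; have iP := Pirr eG eH.
have full := dm.1.
have bd := bdE sP dm.
rewrite (SR_char sP iP full) (d3E sP full) (d2E sP).
split.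
- case=> [[ab tw]|[D|nm]].
  + left; split => //; by apply: contraTneq ab => ->; rewrite iP.
  + right.
    case: (classic (exists v, ~~ meet (modprod eG eH) (g,h) v)) => [[z fz]|na].
      right; right.
      by case: (KEY sG iG sH iH D fz) => [?|?]; [left; left | right; left].
    case: (classic (exists v, ~~ meet (modprod eG eH) (g',h') v)) => [[z fz]|nb].
      right; right.
      by case: (KEY sG iG sH iH (Dd_sym sP D) fz) => [?|?]; [left; right | right; right].
    left; have [nba [c1 _]] := D; split; first by rewrite (c1 _ (inNx _ _)) nba.
    by rewrite !bd.
  + by right; right; left.
- case=> [[nab tw]|[[d2 [nba nbb]]|[d3|[[iv|iv]|[v|v]]]]].
  + left; split => //; rewrite (edgeE iP) eq_sym nab /= tw; exact: inNx.
  + right; left; move/andP: d2 => [m nb]; split => //; split.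
    * move=> x xa; apply: contraT => f; case: nbb; rewrite bd; exists x; by rewrite meetC.
    * move=> y yb; apply: contraT => f; case: nba; rewrite bd; exists y; by rewrite meetC.
  + by right; right.
  + by right; left; apply: (REV sG iG sH iH); left.
  + by right; left; apply: (Dd_sym sP); apply: (REV sG iG sH iH); left.
  + by right; left; apply: (REV sG iG sH iH); right.
  + by right; left; apply: (Dd_sym sP); apply: (REV sG iG sH iH); right.
Qed.
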